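(* Consider a restless bandit, set system $(N^{\{0,1\}},\mathcal F)$ as in the context, suppose the bandit is PCL-indexable relative to $b^u$ and $\mathcal F$-policies, with the adaptive-greedy algorithm on input $\widehat{\mathbf h}^0_{N^{\{0,1\}}}$ producing $\boldsymbol\pi$ and $\boldsymbol\nu$, and let $S_k=\{\pi_k,\dots,\pi_n\}$. Suppose further that $w^S_j\le w^T_j$ whenever $j\in S\subset T$ with $S,T\in\mathcal F$. Then for every $j\in N^{\{0,1\}}$, $$\nu_j=\max\left\{\frac{v^{S\setminus\{j\}}_j-v^S_j}{b^S_j-b^{S\setminus\{j\}}_j}:j\in S\in\{S_1,\dots,S_n\}\right\}.$$
   Context: Restless bandit: finite state space $N=N^{\{0,1\}}\cup N^{\{1\}}$ (disjoint); actions $a\in\{0,1\}$; one-period costs $h^a_i$, transition probabilities $p^a_{ij}$ with $p^1_{ij}=p^0_{ij}$ for $i\in N^{\{1\}}$; discount factor $\beta\in(0,1)$; activity weights $\theta^1_j>0$. Stationary policies $u:N\to[0,1]$ with $u(i)=1$ on $N^{\{1\}}$. $v^u_i=E^u_i[\sum_{t\ge0}h^{a(t)}_{X(t)}\beta^t]$, $b^u_i=E^u_i[\sum_{t\ge0}\theta^1_{X(t)}a(t)\beta^t]$. For $S\subseteq N^{\{0,1\}}$ the $S$-active policy is active on $S\cup N^{\{1\}}$, passive elsewhere; $v^S_i,b^S_i$ its measures. Marginal workloads $w^S_i=\theta^1_i1\{i\in N^{\{0,1\}}\}+\beta\sum_j(p^1_{ij}-p^0_{ij})b^S_j$. $\widehat{\mathbf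 h}^0=\mathbf h^0-(\mathbf I-\beta\mathbf P^0)(\mathbf I-\beta\mathbf P^1)^{-1}\mathbf h^1$. $\mathcal F\subseteq2^{N^{\{0,1\}}}$: $\emptyset\in\mathcal F$; each nonempty $S\in\mathcal F$ has nonempty $\partial^-S=\{j\in S:S\setminus\{j\}\in\mathcal F\}$; each $S\in\mathcal F$ other than $N^{\{0,1\}}$ has $j\notin S$ with $S\cup\{j\}\in\mathcal F$. Adaptive-greedy algorithm on input $\mathbf c$, $n=|N^{\{0,1\}}|$: $S_1=N^{\{0,1\}}$, $y^{S_1}=\min\{c_j/w^{S_1}_j:j\in\partial^-S_1\}$, $\pi_1$ a minimizer, $\nu_{\pi_1}=y^{S_1}$; for $k=2..n$: $S_k=S_{k-1}\setminus\{\pi_{k-1}\}$, $y^{S_k}=\min\{(c_j-\sum_{l<k}y^{S_l}w^{S_l}_j)/w^{S_k}_j:j\in\partial^-S_k\}$, $\pi_k$ a minimizer, $\nu_{\pi_k}=\nu_{\pi_{k-1}}+y^{S_k}$. PCL-indexability: (i) $w^S_j>0$ for $S\in\mathcal F$, $j\in N^{\{0,1\}}$; (ii) on input $(\widehat h^0_j)_{j\in N^{\{0,1\}}}$ the output satisfies $\nu_{\pi_1}\le\cdots\le\nu_{\pi_n}$. *)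

(* Defs.v *)
From HB Require Import structures.
From mathcomp Require Import all_boot all_order all_algebra.
From mathcomp Require Import all_classical all_reals all_analysis.
Set Implicit Arguments. Unset Strict Implicit. Unset Printing Implicit Defensive.
Import Order.TTheory GRing.Theory Num.Theory.
Local Open Scope ring_scope.

(* State space N = 'I_m ; N1 = N^{1} ; N^{0,1} = ~: N1. *)

Section RB.
Variables (R : realType) (m : nat).

(* Expected total discounted value  E_i[ sum_t beta^t r(X t) ]  of the Markov
   chain with transition matrix P, started at i:  E_i[r(X t)] = (P^t r)_i. *)
Definition disc_sum (beta : R) (P : 'M[R]_m) (r : 'I_m -> R) (i : 'I_m) : R :=
  limn (fun T : nat => \sum_(t < T) beta ^+ t * \sum_(j < m) (P ^+ t) i j * r j).

Definition polP (N1 S : {set 'I_m}) (P0 P1 : 'M[R]_m) : 'M[R]_m :=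
  \matrix_(i, j) (if i \in S :|: N1 then P1 i j else P0 i j).

Definition vS (beta : R) (N1 : {set 'I_m}) (P0 P1 : 'M[R]_m) (h0 h1 : 'I_m -> R)
  (S : {set 'I_m}) (i : 'I_m) : R :=
  disc_sum beta (polP N1 S P0 P1) (fun j => if j \in S :|: N1 then h1 j else h0 j) i.

Definition bS (beta : R) (N1 : {set 'I_m}) (P0 P1 : 'M[R]_m) (theta : 'I_m -> R)
  (S : {set 'I_m}) (i : 'I_m) : R :=
  disc_sum beta (polP N1 S P0 P1) (fun j => if j \in S :|: N1 then theta j else 0) i.

Definition wS (beta : R) (N1 : {set 'I_m}) (P0 P1 : 'M[R]_m) (theta : 'I_m -> R)
  (S : {set 'I_m}) (i : 'I_m) : R :=
  (if i \in ~: N1 then theta i else 0)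
  + beta * \sum_(j < m) (P1 i j - P0 i j) * bS beta N1 P0 P1 theta S j.

Definition hhat0 (beta : R) (P0 P1 : 'M[R]_m) (h0 h1 : 'I_m -> R) : 'I_m -> R :=
  let h0v : 'cV[R]_m := \col_i h0 i in
  let h1v : 'cV[R]_m := \col_i h1 i in
  let hv := h0v - (1%:M - beta *: P0) *m invmx (1%:M - beta *: P1) *m h1v in
  fun j => hv j 0.

Definition set_system (N1 : {set 'I_m}) (F : pred {set 'I_m}) : Prop :=
  [/\ forall S, F S -> S \subset ~: N1,
      F finset.set0,
      forall S, F S -> S != finset.set0 -> exists2 j, j \in S & F (S :\ j) &
      forall S, F S -> S != ~: N1 -> exists2 j, j \notin S & F (j |: S)].

Definition bdry (F : pred {set 'I_m}) (S : {set 'I_m}) : {set 'I_m} :=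
  [set j in S | F (S :\ j)].

(* S_{k+1} = N^{0,1} \ {pi_0, ..., pi_{k-1}}  (0-based indices k) *)
Definition Sk (N01 : {set 'I_m}) (pi : nat -> 'I_m) (k : nat) : {set 'I_m} :=
  N01 :\: \bigcup_(l < k) [set pi l].

(* (pi, y, nu) is an output of the adaptive-greedy algorithm on input c
   (0-based: pi k = pi_{k+1}, y k = y^{S_{k+1}}). *)
Definition adaptive_greedy (N1 : {set 'I_m}) (F : pred {set 'I_m})
  (w : {set 'I_m} -> 'I_m -> R) (c : 'I_m -> R)
  (pi : nat -> 'I_m) (y : nat -> R) (nu : 'I_m -> R) : Prop :=
  let N01 := ~: N1 in
  let S := Sk N01 pi in
  let ratio k j := (c j - \sum_(l < k) y l * w (S l) j) / w (S k) j in
  forall k, (k < #|N01|)%N ->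
    [/\ pi k \in bdry F (S k),
        y k = ratio k (pi k),
        (forall j, j \in bdry F (S k) -> y k <= ratio k j) &
        nu (pi k) = \sum_(l < k.+1) y l].

Definition PCL_indexable (beta : R) (N1 : {set 'I_m}) (P0 P1 : 'M[R]_m)
  (h0 h1 theta : 'I_m -> R) (F : pred {set 'I_m}) : Prop :=
  let w := wS beta N1 P0 P1 theta in
  (forall S, F S -> forall j, j \in ~: N1 -> 0 < w S j) /\
  (forall pi y nu, adaptive_greedy N1 F w (hhat0 beta P0 P1 h0 h1) pi y nu ->
     forall k, (k.+1 < #|~: N1|)%N -> nu (pi k) <= nu (pi k.+1)).

Definition restless_bandit (beta : R) (N1 : {set 'I_m}) (P0 P1 : 'M[R]_m)
  (theta : 'I_m -> R) : Prop :=
  [/\ 0 < beta < 1,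
      forall i j, 0 <= P0 i j /\ 0 <= P1 i j,
      forall i, \sum_(j < m) P0 i j = 1 /\ \sum_(j < m) P1 i j = 1,
      forall i j, i \in N1 -> P1 i j = P0 i j &
      forall j, 0 < theta j].

End RB.

(* Main.v *)
Require Import Defs.
From HB Require Import structures.
From mathcomp Require Import all_boot all_order all_algebra.
From mathcomp Require Import all_classical all_reals all_analysis.
From mathcomp Require Import ring lra.
Import Order.TTheory GRing.Theory Num.Theory numFieldNormedType.Exports.
Local Open Scope ring_scope.

Section Ana.
Variables (R : realType) (m : nat) (beta : R) (P : 'M[R]_m).
Hypothesis hb : 0 < beta < 1.
Hypothesis Pge0 : forall i j, 0 <= P i j.
Hypothesis Psum : forall i, \sum_(j < m) P i j = 1.

Lemma nonneg_sup (u : 'I_m -> R) :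
  (forall i, beta * \sum_(j < m) P i j * u j <= u i) -> forall i, 0 <= u i.
Proof.
move=> H i.
case: (@arg_minP _ R _ i xpredT u isT) => k _ Hmin.
have Hk : u k <= \sum_(j < m) P k j * u j.
  rewrite -[X in X <= _]mul1r -(Psum k) mulr_suml.
  by apply: ler_sum => j _; apply: ler_wpM2l => //; apply: Hmin.
have Hk2 : beta * u k <= u k.
  apply: le_trans (H k); apply: ler_wpM2l => //.
  by case/andP: hb => /ltW.
have Hk0 : 0 <= u k.
  case/andP: hb => _ b1.
  have : 0 <= (1 - beta) * u k by rewrite mulrBl mul1r subr_ge0.
  by rewrite pmulr_rge0 // subr_gt0.
by apply: le_trans Hk0 (Hmin _ isT).
Qed.

Lemma zero_fix (u : 'I_m -> R) :
  (forall i, u i = beta * \sum_(j < m) P i j * u j) -> forall i, u i = 0.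
Proof.
move=> H i; apply/eqP; rewrite eq_le; apply/andP; split.
  rewrite -oppr_ge0; apply: (@nonneg_sup (fun i => - u i)) => k.
  rewrite H -mulrN -sumrN; rewrite le_eqVlt; apply/orP; left; apply/eqP; congr (_ * _); apply: eq_bigr => j _; by rewrite mulrN.
by apply: nonneg_sup => k; rewrite -H.
Qed.

Definition AM : 'M[R]_m := 1%:M - beta *: P.

Lemma AM_unit : AM \in unitmx.
Proof.
rewrite unitmxE unitfE -det_tr; apply/negP => /det0P [v vn0 hv].
move/negP: vn0; apply; apply/eqP/matrixP => a b.
rewrite (ord1 a) mxE.
have := congr1 trmx hv; rewrite trmx_mul trmxK trmx0 => hv'.
have Hu : forall i, v^T i 0 = beta * \sum_(j < m) P i j * v^T j 0.
  move=> i; move/matrixP: hv' => /(_ i 0).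
  rewrite /AM mulmxBl mul1mx -scalemxAl !mxE => /eqP. by rewrite subr_eq0 => /eqP.
by have := zero_fix _ Hu b; rewrite mxE.
Qed.


Lemma bound_pow (x : 'cV[R]_m) T i :
  `|((P ^+ T) *m x) i 0| <= \sum_(j < m) `|x j 0|.
Proof.
elim: T i => [|T IH] i.
  rewrite expr0 mul1mx (bigD1 i) //= lerDl; exact: sumr_ge0.
rewrite exprS -mulmxE -mulmxA mxE.
apply: le_trans (ler_norm_sum _ _ _) _.
apply: le_trans (_ : \sum_(j < m) P i j * \sum_(k < m) `|x k 0| <= _).
  apply: ler_sum => j _; rewrite normrM ger0_norm //; apply: ler_wpM2l => //.
by rewrite -mulr_suml Psum mul1r.
Qed.

Lemma partial_eq (r : 'I_m -> R) T i :
  let x := invmx AM *m (\col_j r j) in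
  \sum_(t < T) beta ^+ t * \sum_(j < m) (P ^+ t) i j * r j
  = x i 0 - beta ^+ T * ((P ^+ T) *m x) i 0.
Proof.
move=> x.
have rc : \col_j r j = x - beta *: (P *m x).
  have rc : \col_j r j = AM *m x by rewrite /x mulmxA mulmxV ?AM_unit // mul1mx.
  by rewrite {1}rc /AM mulmxBl mul1mx -scalemxAl.
clearbody x.
elim: T => [|T IH].
  by rewrite big_ord0 expr0 mul1r mul1mx subrr.
rewrite big_ord_recr /= IH.
have -> : \sum_(j < m) (P ^+ T) i j * r j = (P ^+ T *m \col_j r j) i 0.
  by rewrite mxE; apply: eq_bigr => j _; rewrite mxE.
rewrite rc mulmxBr -scalemxAr mulmxA.
have -> : P ^+ T *m P = P ^+ T.+1 by rewrite exprSr.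
set a := (P ^+ T *m x). set b := (P ^+ T.+1 *m x). rewrite !mxE (exprS beta).
ring.
Qed.

Lemma disc_sum_eq (r : 'I_m -> R) i :
  disc_sum beta P r i = (invmx AM *m \col_j r j) i 0.
Proof.
rewrite /disc_sum.
set x := invmx AM *m _.
have H : ((\sum_(t < T) beta ^+ t * \sum_(j < m) (P ^+ t) i j * r j) @[T --> \oo] --> (x i 0 : R))%classic.
  have -> : (fun T => \sum_(t < T) beta ^+ t * \sum_(j < m) (P ^+ t) i j * r j)
     = (fun T => x i 0 - beta ^+ T * ((P ^+ T) *m x) i 0).
    by apply: funext => T; rewrite partial_eq.
  rewrite -[X in (_ --> X)%classic]subr0.
  set M := \sum_(j < m) `|x j 0|.
  have b0 : `|beta| < 1 by rewrite ger0_norm; case/andP: hb => // /ltW.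
  apply: cvgB; first exact: cvg_cst.
  apply: (@squeeze_cvgr _ _ _ _ (fun T => - (beta ^+ T * M)) (fun T => beta ^+ T * M)).
  - apply: nearW => T; rewrite -ler_norml normrM ger0_norm; last first.
      by apply: exprn_ge0; case/andP: hb => /ltW.
    apply: ler_wpM2l; last exact: bound_pow.
    by apply: exprn_ge0; case/andP: hb => /ltW.
  - rewrite -oppr0 -(mul0r M); apply: cvgN; apply: cvgMl; exact: cvg_expr.
  - rewrite -(mul0r M); apply: cvgMl; exact: cvg_expr.
exact: (cvg_lim _ H).
Qed.

Lemma disc_fix (r : 'I_m -> R) i :
  disc_sum beta P r i = r i + beta * \sum_(j < m) P i j * disc_sum beta P r j.
Proof.
rewrite disc_sum_eq; under eq_bigr do rewrite disc_sum_eq.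
set x := invmx AM *m _.
have rc : AM *m x = \col_j r j by rewrite /x mulmxA mulmxV ?AM_unit // mul1mx.
move/matrixP: rc => /(_ i 0).
rewrite /AM mulmxBl mul1mx -scalemxAl !mxE => <-.
by rewrite subrK.
Qed.

End Ana.

Lemma sum_sub (R : realType) m (p a b : 'I_m -> R) :
  \sum_(k < m) p k * (a k - b k) = \sum_(k < m) p k * a k - \sum_(k < m) p k * b k.
Proof. rewrite -sumrB; apply: eq_bigr => k _; ring. Qed.

Lemma sum_subl (R : realType) m (p q a : 'I_m -> R) :
  \sum_(k < m) (p k - q k) * a k = \sum_(k < m) p k * a k - \sum_(k < m) q k * a k.
Proof. rewrite -sumrB; apply: eq_bigr => k _; ring. Qed.

Lemma sum_scale (R : realType) m (p a : 'I_m -> R) y :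
  \sum_(k < m) p k * (y * a k) = y * \sum_(k < m) p k * a k.
Proof. rewrite mulr_sumr; apply: eq_bigr => k _; ring. Qed.

Arguments sum_sub {R m}.
Arguments sum_subl {R m}.
Arguments sum_scale {R m}.

Section Bandit.
Variables (R : realType) (m : nat) (N1 : {set 'I_m}) (P0 P1 : 'M[R]_m)
  (h0 h1 theta : 'I_m -> R) (beta : R).
Hypothesis rb : restless_bandit beta N1 P0 P1 theta.

Let PS S := polP N1 S P0 P1.
Let V S := vS beta N1 P0 P1 h0 h1 S.
Let B S := bS beta N1 P0 P1 theta S.
Let W S := wS beta N1 P0 P1 theta S.
Definition cc S l := h0 l + beta * \sum_(k < m) P0 l k * V S k
                    - h1 l - beta * \sum_(k < m) P1 l k * V S k.
Definition Lf S (f : 'I_m -> R) i := f i - beta * \sum_(k < m) PS S i k * f k.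

Lemma PSE S i k : PS S i k = if i \in S :|: N1 then P1 i k else P0 i k.
Proof. by rewrite /PS /polP mxE. Qed.

Lemma hb : 0 < beta < 1. Proof. by case: rb. Qed.

Lemma PS_ge0 S i k : 0 <= PS S i k.
Proof. case: rb => _ H _ _ _; rewrite PSE; case: ifP => _; by case: (H i k). Qed.

Lemma PS_sum S i : \sum_(k < m) PS S i k = 1.
Proof.
case: rb => _ _ H _ _; rewrite (eq_bigr _ (fun k _ => PSE S i k)).
by case: (i \in S :|: N1); case: (H i).
Qed.

Lemma LV S i : Lf S (V S) i = if i \in S :|: N1 then h1 i else h0 i.
Proof.
rewrite /Lf {1}/V /vS disc_fix; [|exact: hb|exact: PS_ge0|exact: PS_sum].
by rewrite addrK.
Qed.

Lemma LB S i : Lf S (B S) i = if i \in S :|: N1 then theta i else 0.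
Proof.
rewrite /Lf {1}/B /bS disc_fix; [|exact: hb|exact: PS_ge0|exact: PS_sum].
by rewrite addrK.
Qed.

Lemma Lf_nonneg S f : (forall i, 0 <= Lf S f i) -> forall i, 0 <= f i.
Proof.
move=> H; apply: (@nonneg_sup R m beta (PS S) hb (PS_ge0 S) (PS_sum S)) => i.
by have := H i; rewrite /Lf subr_ge0.
Qed.

Lemma Lf_zero S f : (forall i, Lf S f i = 0) -> forall i, f i = 0.
Proof.
move=> H; apply: (@zero_fix R m beta (PS S) hb (PS_ge0 S) (PS_sum S)) => i.
by have /eqP := H i; rewrite /Lf subr_eq0 => /eqP.
Qed.


Lemma Lf_sub S f g i : Lf S (fun k => f k - g k) i = Lf S f i - Lf S g i.
Proof. rewrite /Lf (sum_sub (PS S i) f g); ring. Qed.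

Lemma Lf_lin S f g h y i :
  Lf S (fun k => f k - g k - y * h k) i = Lf S f i - Lf S g i - y * Lf S h i.
Proof.
rewrite /Lf (sum_sub (PS S i) (fun k => f k - g k) (fun k => y * h k)).
rewrite (sum_sub (PS S i) f g) sum_scale; ring.
Qed.

Lemma step (S : {set 'I_m}) j : j \in S -> j \notin N1 -> 0 < W S j ->
  let y := cc S j / W S j in
  [/\ (forall i, V (S :\ j) i - V S i = y * (B S i - B (S :\ j) i)),
      0 < B S j - B (S :\ j) j &
      forall l, cc (S :\ j) l = cc S l + y * (W (S :\ j) l - W S l)].
Proof.
move=> jS jN wpos y.
set S' := S :\ j.
have memE : forall i, i != j -> (i \in S' :|: N1) = (i \in S :|: N1).
  by move=> i ij; rewrite !inE ij.
have jS1 : j \in S :|: N1 by rewrite inE jS.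
have jS'1 : (j \in S' :|: N1) = false by rewrite !inE eqxx /= (negbTE jN).
have rowE : forall i, i != j -> forall k, PS S' i k = PS S i k.
  by move=> i ij k; rewrite !PSE memE.
have defect : forall f i, Lf S' f i =
    Lf S f i + beta * \sum_(k < m) (PS S i k - PS S' i k) * f k.
  by move=> f i; rewrite /Lf sum_subl; ring.
have defect0 : forall f i, i != j -> \sum_(k < m) (PS S i k - PS S' i k) * f k = 0.
  by move=> f i ij; apply: big1 => k _; rewrite rowE // subrr mul0r.
have defectj : forall f, \sum_(k < m) (PS S j k - PS S' j k) * f k
    = \sum_(k < m) P1 j k * f k - \sum_(k < m) P0 j k * f k.
  move=> f; rewrite -sum_subl; apply: eq_bigr => k _.
  by rewrite !PSE jS1 jS'1.
pose z := fun i => B S i - B S' i.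
have Lz : forall i, Lf S' z i = if i == j then W S j else 0.
  move=> i; rewrite /z Lf_sub defect !LB.
  case: (eqVneq i j) => [->|ij].
    rewrite jS1 jS'1 defectj /W /wS inE jN (sum_subl (P1 j) (P0 j)); ring.
  by rewrite memE // defect0 // mulr0 addr0 subrr.
have zpos : forall i, 0 <= z i.
  apply: (Lf_nonneg S') => i; rewrite Lz; case: eqP => _ //; exact: ltW.
have zj : 0 < z j.
  have -> : z j = Lf S' z j + beta * \sum_(k < m) PS S' j k * z k by rewrite /Lf subrK.
  rewrite Lz eqxx; apply: (lt_le_trans wpos); rewrite lerDl; apply: mulr_ge0.
    by case/andP: hb => /ltW.
  by apply: sumr_ge0 => k _; apply: mulr_ge0; [exact: PS_ge0|exact: zpos].
have wne0 : W S j != 0 by rewrite gt_eqF.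
have yW : y * W S j = cc S j by rewrite /y divfK.
pose u := fun i => V S' i - V S i - y * z i.
have u0 : forall i, u i = 0.
  apply: (Lf_zero S') => i; rewrite /u Lf_lin (defect (V S)) Lz !LV.
  case: (eqVneq i j) => [->|ij].
    rewrite jS1 jS'1 defectj yW /cc; ring.
  by rewrite memE // defect0 // mulr0 addr0 mulr0 subr0 subrr.
have DV : forall i, V S' i - V S i = y * z i.
  by move=> i; apply/eqP; rewrite -subr_eq0; apply/eqP; exact: u0.
split => // l.
have DS : forall p : 'I_m -> R, \sum_(k < m) p k * V S' k
    = \sum_(k < m) p k * V S k + y * \sum_(k < m) p k * z k.
  move=> p; rewrite -sum_scale -big_split; apply: eq_bigr => k _.
  have := DV k; rewrite -/(V S') => H.
  have -> : V S' k = V S k + y * z k by rewrite -H; ring.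
  by rewrite mulrDr.
rewrite /cc !DS /W /wS.
have -> : \sum_(k < m) (P1 l k - P0 l k) * B S k
    = \sum_(k < m) (P1 l k - P0 l k) * B S' k + \sum_(k < m) (P1 l k - P0 l k) * z k.
  by rewrite /z (sum_sub (fun k => P1 l k - P0 l k)); ring.
rewrite (sum_subl (P1 l) (P0 l) z).
ring.
Qed.

Lemma cc_base l : cc (~: N1) l = hhat0 beta P0 P1 h0 h1 l.
Proof.
have mem : forall i, i \in ~: N1 :|: N1 by move=> i; rewrite !inE orNb.
have Vfix : forall i, V (~: N1) i = h1 i + beta * \sum_(k < m) P1 i k * V (~: N1) k.
  move=> i; have := LV (~: N1) i; rewrite mem /Lf => <-.
  have -> : \sum_(k < m) P1 i k * V (~: N1) k = \sum_(k < m) PS (~: N1) i k * V (~: N1) k.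
    by apply: eq_bigr => k _; rewrite PSE mem.
  by rewrite subrK.
have P1ge0 : forall i k, 0 <= P1 i k by case: rb => _ H _ _ _ i k; case: (H i k).
have P1sum : forall i, \sum_(k < m) P1 i k = 1 by case: rb => _ _ H _ _ i; case: (H i).
have U : (1%:M - beta *: P1) \in unitmx := @AM_unit R m beta P1 hb P1ge0 P1sum.
have colE : (1%:M - beta *: P1) *m (\col_i V (~: N1) i) = \col_i h1 i.
  rewrite mulmxBl mul1mx -scalemxAl; apply/matrixP => i k; rewrite ord1 !mxE.
  have -> : \sum_j P1 i j * (\col_i0 V (~: N1) i0) j 0 = \sum_(k < m) P1 i k * V (~: N1) k.
    by apply: eq_bigr => k' _; rewrite mxE.
  by rewrite (Vfix i) addrK.
rewrite /hhat0 /= -colE -mulmxA mulKmx // mulmxBl mul1mx -scalemxAl !mxE.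
rewrite /cc (Vfix l).
have -> : \sum_j P0 l j * (\col_i V (~: N1) i) j 0 = \sum_(k < m) P0 l k * V (~: N1) k.
  by apply: eq_bigr => k _; rewrite mxE.
ring.
Qed.

End Bandit.

Lemma SkS (m : nat) (N01 : {set 'I_m}) pi k : Sk N01 pi k.+1 = Sk N01 pi k :\ pi k.
Proof.
rewrite /Sk big_ord_recr /=; apply/setP => x; rewrite !inE.
by case: (x \in \bigcup_(l < k) [set pi l]); case: (x == pi k); case: (x \in N01).
Qed.

Lemma Sk0 (m : nat) (N01 : {set 'I_m}) pi : Sk N01 pi 0 = N01.
Proof. by rewrite /Sk big_ord0 finset.setD0. Qed.

Lemma Sk_dec (m : nat) (N01 : {set 'I_m}) pi k k' : (k <= k')%N ->
  Sk N01 pi k' \subset Sk N01 pi k.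
Proof.
elim: k' => [|k' IH].
  by rewrite leqn0 => /eqP ->; exact: fintype.subxx.
rewrite leq_eqVlt => /orP [/eqP -> |]; first exact: fintype.subxx.
rewrite ltnS => /IH H.
apply: (fintype.subset_trans _ H); rewrite SkS; exact: subD1set.
Qed.

Arguments Sk_dec {m}.

Lemma F_full (m : nat) (N1 : {set 'I_m}) (F : pred {set 'I_m}) :
  Defs.set_system N1 F -> F (~: N1).
Proof.
case=> Fsub F0 _ Fext.
have H : forall d, (d <= #|~: N1|)%N -> exists2 T, F T & (d <= #|T|)%N.
  elim=> [|d IH] hd; first by exists finset.set0.
  case: (IH (ltnW hd)) => T FT dT.
  case: (eqVneq T (~: N1)) => [ET|NT].
    by exists T => //; rewrite ET.
  case: (Fext T FT NT) => x xT Fx; exists (x |: T) => //.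
  by rewrite cardsU1 xT add1n ltnS.
case: (H _ (leqnn _)) => T FT cT.
suff -> : ~: N1 = T by [].
by apply/eqP; rewrite eq_sym eqEcard Fsub.
Qed.

From mathcomp Require Import zify.
Import Defs.

Theorem theorem11 (R : realType) (m : nat) (N1 : {set 'I_m})
  (P0 P1 : 'M[R]_m) (h0 h1 theta : 'I_m -> R) (beta : R)
  (F : pred {set 'I_m}) (pi : nat -> 'I_m) (y : nat -> R) (nu : 'I_m -> R) :
  restless_bandit beta N1 P0 P1 theta ->
  set_system N1 F ->
  PCL_indexable beta N1 P0 P1 h0 h1 theta F ->
  adaptive_greedy N1 F (wS beta N1 P0 P1 theta) (hhat0 beta P0 P1 h0 h1) pi y nu ->
  (forall S T j, F S -> F T -> S \subset T -> j \in S ->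
     wS beta N1 P0 P1 theta S j <= wS beta N1 P0 P1 theta T j) ->
  forall j, j \in ~: N1 ->
    let ratio S := (vS beta N1 P0 P1 h0 h1 (S :\ j) j - vS beta N1 P0 P1 h0 h1 S j)
                   / (bS beta N1 P0 P1 theta S j - bS beta N1 P0 P1 theta (S :\ j) j) in
    (exists2 k, (k < #|~: N1|)%N & j \in Sk (~: N1) pi k /\ nu j = ratio (Sk (~: N1) pi k)) /\
    (forall k, (k < #|~: N1|)%N -> j \in Sk (~: N1) pi k -> ratio (Sk (~: N1) pi k) <= nu j).
Proof.
move=> rb ss [wpos mono] ag wmono j jN ratio.
have jN1 : j \notin N1 by move: jN; rewrite inE.
have STEP := @step R m N1 P0 P1 h0 h1 theta beta rb.
have CCB := @cc_base R m N1 P0 P1 h0 h1 theta beta rb.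
pose n := #|~: N1|.
pose S := Sk (~: N1) pi.
pose W := wS beta N1 P0 P1 theta.
pose c := cc R m N1 P0 P1 h0 h1 beta.
pose A k l := hhat0 beta P0 P1 h0 h1 l - \sum_(i < k) y i * W (S i) l.
pose nv k := \sum_(i < k) y i.
have AG : forall k, (k < n)%N ->
  [/\ pi k \in bdry F (S k), y k = A k (pi k) / W (S k) (pi k),
      (forall l, l \in bdry F (S k) -> y k <= A k l / W (S k) l) &
      nu (pi k) = nv k.+1] := ag.
have piS : forall k, (k < n)%N -> pi k \in S k.
  by move=> k /AG [+ _ _ _]; rewrite inE => /andP [].
have Fstep : forall k, (k < n)%N -> F (S k.+1).
  by move=> k /AG [+ _ _ _]; rewrite inE /S SkS => /andP [].
have FS : forall k, (k <= n)%N -> F (S k).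
  case=> [|k] hk; last exact: Fstep.
  by rewrite /S Sk0; exact: F_full.
have SN : forall k, S k \subset ~: N1 by move=> k; rewrite /S /Sk subsetDl.
have piN' : forall k, (k < n)%N -> pi k \in ~: N1.
  by move=> k hk; apply: (fintype.subsetP (SN k)); exact: piS.
have piN : forall k, (k < n)%N -> pi k \notin N1.
  by move=> k hk; have := piN' k hk; rewrite inE.
have Wpos : forall k, (k <= n)%N -> forall l, l \in ~: N1 -> 0 < W (S k) l.
  by move=> k hk l hl; apply: wpos => //; exact: FS.
pose r k := c (S k) (pi k) / W (S k) (pi k).
have cstep : forall k, (k < n)%N -> forall l,
    c (S k.+1) l = c (S k) l + r k * (W (S k.+1) l - W (S k) l).
  move=> k hk l.
  have [_ _ hc] := STEP _ _ (piS k hk) (piN k hk) (Wpos k (ltnW hk) _ (piN' k hk)).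
  by rewrite /S SkS; exact: hc.
have nv1 : forall k, nv k.+1 = nv k + y k by move=> k; rewrite /nv big_ord_recr.
have inv : forall k, (k < n)%N -> forall l, A k l = c (S k) l - nv k * W (S k) l.
  elim=> [|k IH] hk l.
    by rewrite /A /nv !big_ord0 mul0r !subr0 /c /S Sk0 CCB.
  have hk' : (k < n)%N by lia.
  have [_ hy _ _] := AG k hk'.
  have wne : W (S k) (pi k) != 0 by rewrite gt_eqF // Wpos ?piN' // ltnW.
  have yk : y k = r k - nv k by rewrite hy IH // mulrBl mulfK.
  have Ak1 : A k.+1 l = A k l - y k * W (S k) l.
    by rewrite /A big_ord_recr /=; ring.
  rewrite Ak1 IH // cstep // nv1 yk; ring.
have yk : forall k, (k < n)%N -> y k = r k - nv k.
  move=> k hk; have [_ hy _ _] := AG k hk.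
  have wne : W (S k) (pi k) != 0 by rewrite gt_eqF // Wpos ?piN' // ltnW.
  by rewrite hy inv // mulrBl mulfK.
have nu_eq : forall k, (k < n)%N -> nu (pi k) = r k.
  move=> k hk; have [_ _ _ ->] := AG k hk.
  by rewrite nv1 yk // addrC subrK.
have rat : forall k, (k < n)%N -> j \in S k -> ratio (S k) = c (S k) j / W (S k) j.
  move=> k hk jk.
  have [h1' h2' _] := STEP _ _ jk jN1 (Wpos k (ltnW hk) j jN).
  rewrite /ratio h1' mulfK //; exact: lt0r_neq0.
have nu_mono : forall k k', (k <= k')%N -> (k' < n)%N -> nu (pi k) <= nu (pi k').
  move=> k; elim=> [|k' IH] hk hk'.
    by move: hk; rewrite leqn0 => /eqP ->.
  move: hk; rewrite leq_eqVlt => /orP [/eqP -> //| hk].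
  apply: le_trans (IH _ _) (mono _ _ _ ag _ hk'); lia.
have card : forall k, (k <= n)%N -> #|S k| = (n - k)%N.
  elim=> [|k IH] hk; first by rewrite /S Sk0 subn0.
  have := cardsD1 (pi k) (S k); rewrite piS; last by lia.
  rewrite IH; last by lia.
  rewrite /S SkS -/S /= => H; by rewrite subnS H add1n.
have Sn0 : j \notin S n.
  have /eqP := card n (leqnn n); rewrite subnn cards_eq0 => /eqP ->.
  by rewrite inE.
have ex : exists k, j \notin S k by exists n.
case: (ex_minnP ex) => k0 jk0 kmin.
have jS0 : j \in S 0 by rewrite /S Sk0.
case: k0 jk0 kmin => [|K] jK1 kmin; first by rewrite jS0 in jK1.
have Kn : (K < n)%N by have := kmin n Sn0; lia.
have jK : j \in S K.
  apply/negPn/negP => H; have := kmin K H; lia.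
have piK : pi K = j.
  move: jK1; rewrite /S SkS -/S in_setD1 jK andbT negbK => /eqP ->. by [].
have memk : forall k, (k < n)%N -> j \in S k -> (k <= K)%N.
  move=> k hk jk; rewrite leqNgt; apply/negP => Kk.
  have := fintype.subsetP (Sk_dec (~: N1) pi _ _ Kk) j jk.
  by move: jK1; rewrite -/S => /negP.
have memk' : forall k, (k <= K)%N -> j \in S k.
  by move=> k kK; exact: (fintype.subsetP (Sk_dec (~: N1) pi _ _ kK) j jK).
split.
  exists K => //; split => //.
  by rewrite (rat K) // -{1}piK nu_eq // /r piK.
move=> k hk jk.
rewrite (rat k) //.
have kK := memk k hk jk.
have D : forall d, (d <= K)%N -> c (S (K - d)%N) j - nu j * W (S (K - d)%N) j <= 0.
  elim=> [|d IH] hd.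
    have -> : nu j = r K by rewrite -nu_eq // piK.
    rewrite subn0 /r piK divfK ?subrr //.
    by rewrite gt_eqF // Wpos // ltnW.
  have e : (K - d = (K - d.+1).+1)%N by lia.
  have IH' := IH (ltnW hd); rewrite e in IH'.
  set k' := (K - d.+1)%N in IH' *.
  have k'n : (k' < n)%N by rewrite /k'; lia.
  have mon : r k' <= nu j by rewrite -nu_eq // -piK; apply: nu_mono => //; rewrite /k'; lia.
  have wle : W (S k'.+1) j <= W (S k') j.
    apply: wmono; [exact: FS|apply: FS; exact: ltnW|exact: Sk_dec|apply: memk'; rewrite /k'; lia].
  have prod : (nu j - r k') * (W (S k'.+1) j - W (S k') j) <= 0.
    by apply: mulr_ge0_le0; rewrite ?subr_ge0 ?subr_le0.
  have -> : c (S k') j - nu j * W (S k') j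
      = (c (S k'.+1) j - nu j * W (S k'.+1) j) + (nu j - r k') * (W (S k'.+1) j - W (S k') j).
    by rewrite cstep //; ring.
  by rewrite -[0]addr0; apply: lerD.
have := D (K - k)%N (leq_subr _ _); rewrite subKn // => Dk.
rewrite ler_pdivrMr; last by apply: Wpos => //; exact: ltnW.
by rewrite -subr_le0.
Qed.
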